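(* For any $h,n\in\mathbb{N}$ with $h\le n$ there exists a finite, simple, connected graph $G$ with $h(G)=h$ and $n$ nodes such that, for the set $\mathcal{H}$ of convex bipartitions of $G$, $M_{\mathrm{sd}}(\mathcal{H})=\Omega(h)$.
   Context: Self-directed learning: an unknown labeling $y\in\mathcal{H}$ is fixed; for $t=1,\dots,n$ the learner, knowing $G$ and $\mathcal{H}$ but not $y$, selects a not-yet-selected node, predicts its label, then observes the true label; $M_{\mathrm{sd}}(A,\mathcal{H})$ is the worst-case (over $y\in\mathcal{H}$) number of mistakes of algorithm $A$, and $M_{\mathrm{sd}}(\mathcal{H})=\min_A M_{\mathrm{sd}}(A,\mathcal{H})$. The interval $I(u,v)$ is the set of nodes on at least one shortest $u$–$v$ path; $C\subseteq V$ is convex if $I(a,b)\subseteq C$ for all $a,b\in C$; a convex bipartition is a labeling $V\to\{1,2\}$ with both label classes convex. $h(G)$ is the largest $w$ such that $K_w$ is a minor of $G$. *)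

(* Defs.v *)
From mathcomp Require Import all_boot all_order all_algebra.
Set Implicit Arguments. Unset Strict Implicit. Unset Printing Implicit Defensive.

Section Graphs.
Variable V : finType.

Definition simple_graph (e : rel V) : Prop := symmetric e /\ irreflexive e.

Definition connected_graph (e : rel V) : Prop := forall x y : V, connect e x y.

(* p is a u-v walk given as the sequence of nodes after u. *)
Definition uv_path (e : rel V) (u v : V) (p : seq V) : bool :=
  path e u p && (last u p == v).

Definition shortest_path (e : rel V) (u v : V) (p : seq V) : Prop :=
  uv_path e u v p /\ forall q, uv_path e u v q -> size p <= size q.

Definition in_interval (e : rel V) (u v w : V) : Prop :=
  exists p, shortest_path e u v p /\ w \in u :: p.

Definition convex (e : rel V) (C : {set V}) : Prop :=
  forall a b w, a \in C -> b \in C -> in_interval e a b w -> w \in C.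

(* Labels {1,2} encoded as false/true. *)
Definition convex_bipartition (e : rel V) (y : {ffun V -> bool}) : Prop :=
  convex e [set x | ~~ y x] /\ convex e [set x | y x].

Definition induced_connected (e : rel V) (S : {set V}) : Prop :=
  forall x y, x \in S -> y \in S ->
    connect [rel a b | [&& e a b, a \in S & b \in S]] x y.

Definition has_K_minor (e : rel V) (w : nat) : Prop :=
  exists B : 'I_w -> {set V},
    (forall i, B i != set0) /\
    (forall i, induced_connected e (B i)) /\
    (forall i j, i != j -> [disjoint B i & B j]) /\
    (forall i j, i != j -> exists x y, [/\ x \in B i, y \in B j & e x y]).

Definition hadwiger (e : rel V) (h : nat) : Prop :=
  has_K_minor e h /\ forall w, has_K_minor e w -> w <= h.

(* Self-directed learner: from the history of (selected node, revealed
   label) pairs it selects the next node and predicts its label. *)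
Definition learner := seq (V * bool) -> V * bool.

Fixpoint run (A : learner) (y : {ffun V -> bool}) (k : nat)
  : seq (V * bool) * nat :=
  match k with
  | 0 => ([::], 0)
  | k'.+1 =>
      let hm := run A y k' in
      let vp := A hm.1 in
      (rcons hm.1 (vp.1, y vp.1), hm.2 + (vp.2 != y vp.1))
  end.

Definition valid_learner (e : rel V) (A : learner) : Prop :=
  forall y, convex_bipartition e y -> uniq (map fst (run A y #|V|).1).

Definition mistakes (A : learner) (y : {ffun V -> bool}) : nat :=
  (run A y #|V|).2.

End Graphs.

(* Main.v *)
Require Import Defs.
From mathcomp Require Import all_boot all_order all_algebra.
From mathcomp Require Import lra zify.
Import GRing.Theory Num.Theory.

Section Adv.
Variable V : finType.
Variable S : pred V.
Variable A : learner V.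

Fixpoint adv k : seq (V * bool) := match k with
  | 0 => [::]
  | k'.+1 => let s := adv k' in
      rcons s ((A s).1, if (A s).1 \in S then ~~ (A s).2 else true) end.

Definition lookup (s : seq (V * bool)) (v : V) : bool :=
  (nth (v, true) s (find (fun p : V * bool => p.1 == v) s)).2.

Definition yadv : {ffun V -> bool} :=
  [ffun v => if v \in S then lookup (adv #|V|) v else true].

Lemma yadv_out v : v \notin S -> yadv v.
Proof. by move=> H; rewrite /yadv ffunE (negbTE H). Qed.

Lemma adv_prefix k m : k <= m -> exists r, adv m = adv k ++ r.
Proof.
elim: m => [|m IH]; first by rewrite leqn0 => /eqP ->; exists [::]; rewrite cats0.
rewrite leq_eqVlt => /orP [/eqP -> | H]; first by exists [::]; rewrite cats0.
have [r Hr] := IH H. exists (rcons r ((A (adv m)).1,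
   if (A (adv m)).1 \in S then ~~ (A (adv m)).2 else true)).
by rewrite /= Hr rcons_cat.
Qed.

Lemma run_prefix y k m : k <= m -> exists r, (run A y m).1 = (run A y k).1 ++ r.
Proof.
elim: m => [|m IH]; first by rewrite leqn0 => /eqP ->; exists [::]; rewrite cats0.
rewrite leq_eqVlt => /orP [/eqP -> | H]; first by exists [::]; rewrite cats0.
have [r Hr] := IH H. exists (rcons r ((A (run A y m).1).1, y (A (run A y m).1).1)).
by rewrite /= Hr rcons_cat.
Qed.

Lemma size_run y k : size (run A y k).1 = k.
Proof. by elim: k => //= k IH; rewrite size_rcons IH. Qed.

Hypothesis Hu : uniq (map fst (run A yadv #|V|).1).

Lemma key k : k <= #|V| -> (run A yadv k).1 = adv k /\
   count (mem S) (map fst (adv k)) <= (run A yadv k).2.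
Proof.
elim: k => [|k IH] Hk; first by [].
have [IH1 IH2] := IH (ltnW Hk).
set v := (A (adv k)).1.
have Hy : yadv v = if v \in S then ~~ (A (adv k)).2 else true.
  rewrite /yadv ffunE; case: ifP => vS //.
  have [r Hr] := @adv_prefix k.+1 #|V| Hk.
  have [r' Hr'] := @run_prefix yadv k.+1 #|V| Hk.
  move: Hu; rewrite Hr' map_cat cat_uniq => /andP [Hu1 _].
  move: Hu1; rewrite /= IH1 map_rcons rcons_uniq => /andP [Hnot _].
  rewrite /lookup Hr /= vS.
  rewrite (nth_rcons_cat_find (v, true) r (p := fun p : V * bool => p.1 == v)) //.
  apply/hasPn => p Hp; apply: contra Hnot => /eqP Hpv; rewrite -/v -Hpv /=; exact: map_f.
rewrite /= IH1 -/v Hy; split; first by [].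
rewrite -cats1 map_cat count_cat /= addn0.
case vS: (v \in S) => /=.
  by case: (A (adv k)).2 => /=; rewrite leq_add2r.
by case: (A (adv k)).2 => /=; rewrite addn0 (leq_trans IH2) // leq_addr.
Qed.

Lemma all_in (s : seq V) : uniq s -> size s = #|V| -> forall x, x \in s.
Proof.
move=> Hs Hsz x; apply/negPn/negP => Hx.
have H0 : 0 < #|V| by apply/card_gt0P; exists x.
have : size s <= size (enum (predC1 x)).
  apply: uniq_leq_size => // z Hz; rewrite mem_enum /=.
  by apply: contraNneq Hx => <-.
rewrite -cardE cardC1 Hsz. have H1 : #|V|.-1 < #|V| by rewrite ltn_predL. by rewrite leqNgt H1.
Qed.

Lemma adv_main (T : seq V) : uniq T -> {subset T <= S} -> size T <= mistakes A yadv.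
Proof.
move=> HT HTS.
have [H1 H2] := @key #|V| (leqnn #|V|).
rewrite /mistakes (leq_trans _ H2) //.
rewrite -H1 -size_filter. apply: uniq_leq_size => // x Hx.
rewrite mem_filter; apply/andP; split; first exact: HTS. apply: all_in => //.
by rewrite size_map size_run.
Qed.

End Adv.
Section G.
Variables h n : nat.

Definition ge : rel 'I_n := fun x y : 'I_n =>
  (x != y) && [|| (x < h) && (y < h), (val x == 0) && (h <= y) | (val y == 0) && (h <= x)].

Lemma ge_sym : symmetric ge.
Proof.
move=> x y; rewrite /ge eq_sym; congr andb.
by case: (x < h); case: (y < h); case: (val x == 0); case: (val y == 0);
   case: (h <= x); case: (h <= y).
Qed.

Lemma ge_simple : simple_graph ge.
Proof. by split; [exact: ge_sym | move=> x; rewrite /ge eqxx]. Qed.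

Lemma ge_clique (x y : 'I_n) : x < h -> y < h -> x != y -> ge x y.
Proof. by move=> Hx Hy Hxy; rewrite /ge Hxy Hx Hy. Qed.

Lemma ge_S (x w : 'I_n) : 0 < w < h -> ge x w -> x < h.
Proof.
case/andP=> Hw0 Hwh /andP [_ /or3P [/andP [] // | /andP [_ H] | /andP [H _]]].
- by rewrite leqNgt Hwh in H.
- by move: Hw0; rewrite (eqP H).
Qed.

Lemma adj_interval (a b w : 'I_n) : (a == b) || ge a b -> in_interval ge a b w -> w = a \/ w = b.
Proof.
move=> Hab [p [[Hp Hmin] Hw]].
have Hq : size p <= (a != b).
  case: (eqVneq a b) Hab => [Eab _ | Nab /= Hab].
    by apply: (Hmin [::]); rewrite /uv_path /= Eab.
  by apply: (Hmin [:: b]); rewrite /uv_path /= Hab eqxx.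
case: p Hp Hmin Hw Hq => [|c [|d p]] Hp Hmin Hw Hq //.
- by left; move: Hw; rewrite inE => /eqP.
- move: Hp; rewrite /uv_path /= => /andP [_ /eqP Hc].
  by move: Hw; rewrite !inE => /orP [/eqP|/eqP]; [left | right; rewrite -Hc].
- by move: Hq; case: (a != b).
Qed.

Lemma inner_interval (a b w : 'I_n) : 0 < w < h -> in_interval ge a b w -> w = a \/ w = b.
Proof.
move=> HwS [p [[Hp Hmin] Hw]].
case: (eqVneq w a) => [-> | Hwa]; first by left.
case: (eqVneq w b) => [-> | Hwb]; first by right.
exfalso.
move: Hw; rewrite inE (negbTE Hwa) /= => Hw.
case/splitPr: Hw Hp Hmin => p1 p2.
rewrite /uv_path cat_path last_cat /= => /andP [/andP [Hp1 /andP [Hxw Hp2]] Hl] Hmin.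
case: p2 Hp2 Hl Hmin => [|z p3] /=; first by rewrite (negbTE Hwb).
move=> /andP [Hwz Hp3] Hl Hmin.
set x := last a p1 in Hxw Hp1.
have Hx : x < h by exact: (ge_S x w HwS Hxw).
have Hz : z < h by apply: (ge_S z w HwS); rewrite ge_sym.
case: (eqVneq x z) => [Exz | Nxz].
- have := Hmin (p1 ++ p3).
  rewrite /uv_path cat_path last_cat -/x Exz Hp1 Hp3 Hl /= => /(_ isT).
  by rewrite !size_cat /=; lia.
- have := Hmin (p1 ++ z :: p3).
  rewrite /uv_path cat_path last_cat -/x /= Hp1 Hp3 Hl (ge_clique _ _ Hx Hz Nxz) => /(_ isT).
  by rewrite !size_cat /=; lia.
Qed.

Lemma convex_y (y : {ffun 'I_n -> bool}) :
  (forall v : 'I_n, ~~ ((0 < v) && (v < h)) -> y v) -> convex_bipartition ge y.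
Proof.
move=> Hy; split => a b w; rewrite !inE.
- move=> Ha Hb Hw.
  have HaS : (0 < a) && (a < h) by apply/negPn/negP => /Hy; rewrite (negbTE Ha).
  have HbS : (0 < b) && (b < h) by apply/negPn/negP => /Hy; rewrite (negbTE Hb).
  have Hab : (a == b) || ge a b.
    case: eqVneq => //= Nab; apply: ge_clique => //.
    by case/andP: HaS. by case/andP: HbS.
  by case: (adj_interval _ _ _ Hab Hw) => ->.
- move=> Ha Hb Hw. case: (boolP ((0 < w) && (w < h))) => [HwS | HwS]; last exact: Hy.
  by case: (inner_interval _ _ _ HwS Hw) => ->.
Qed.

Variable z : 'I_n.
Hypothesis Hz : val z = 0.
Hypothesis Hh2 : 2 <= h.
Hypothesis Hhn : h <= n.

Lemma ge_z x : x != z -> ge x z.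
Proof.
rewrite /ge => ->; rewrite Hz eqxx /=.
case: ltnP => [Hx|Hx] /=; last by rewrite orbT.
have Hz2 : nat_of_ord z = 0 := Hz. by rewrite Hz2 ltnW.
Qed.

Lemma ge_conn : connected_graph ge.
Proof.
move=> x y; apply: (connect_trans (y:=z)).
  case: (eqVneq x z) => [->|N]; [exact: connect0 | exact/connect1/ge_z].
case: (eqVneq y z) => [->|N]; [exact: connect0 | apply/connect1; rewrite ge_sym; exact: ge_z].
Qed.

Lemma lb : has_K_minor ge h.
Proof.
exists (fun i => [set widen_ord Hhn i]). split; [|split; [|split]].
- by move=> i; apply/set0Pn; exists (widen_ord Hhn i); rewrite inE.
- by move=> i x y; rewrite !inE => /eqP -> /eqP ->; exact: connect0.
- move=> i j Nij; rewrite disjoints1 inE; apply: contra Nij => /eqP H.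
  by apply/eqP; apply: val_inj; exact: (congr1 val H).
- move=> i j Nij; exists (widen_ord Hhn i), (widen_ord Hhn j); split; rewrite ?inE //.
  apply: ge_clique => /=; [exact: ltn_ord | exact: ltn_ord |].
  by apply: contra Nij => /eqP H; apply/eqP/val_inj; exact: (congr1 val H).
Qed.

Lemma ub w : has_K_minor ge w -> w <= h.
Proof.
move=> [B [Hne [_ [Hdis Hadj]]]].
case: (boolP [forall i, [exists x in B i, x < h]]) => [Hall | Hnall].
- pose g i := odflt z [pick x in B i | x < h].
  have Hg i : (g i \in B i) && (g i < h).
    rewrite /g; case: pickP => [x Hx | Hn] //=.
    exfalso; move/forallP: Hall => /(_ i) /existsP [x Hx]; by rewrite Hn in Hx.
  have Hgi i : g i < h by case/andP: (Hg i).
  pose f i : 'I_h := Ordinal (Hgi i).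
  have finj : injective f.
    move=> i j Eij; apply/eqP; apply: contraT => Nij.
    have Eg : g i = g j by apply: val_inj; exact: (congr1 val Eij).
    have := Hdis _ _ Nij. move/andP: (Hg i) => [Hi _]; move/andP: (Hg j) => [Hj _].
    by move/disjointFr => /(_ _ Hi); rewrite Eg Hj.
  by have := leq_card f finj; rewrite !card_ord.
- move: Hnall; rewrite negb_forall => /existsP [i]; rewrite negb_exists => /forallP Hi.
  have Hzj j : j != i -> z \in B j.
    move=> Nji; have Nij : i != j by rewrite eq_sym.
    have [x [y [Hx Hy Hxy]]] := Hadj i j Nij.
    have hx : h <= x by move: (Hi x); rewrite Hx /= -leqNgt.
    move: Hxy; rewrite /ge => /andP [_ /or3P [/andP [H _] | /andP [H _] | /andP [H _]]].
    + by rewrite ltnNge hx in H.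
    + exfalso; move/eqP: H => H; have H' : nat_of_ord x = 0 := H; lia.
    + suff -> : z = y by []. by apply: val_inj; rewrite Hz (eqP H).
  have : #|predC1 i| <= 1.
    apply/card_le1_eqP => j k Hj Hk. apply/eqP; apply: contraT => Njk.
    have := Hdis _ _ Njk; move/disjointFr => /(_ _ (Hzj k Hk)).
    by rewrite Hzj.
  rewrite cardC1 card_ord => H. lia.
Qed.

End G.

Local Open Scope ring_scope.

Theorem mainTheorem9 :
  exists (c : rat) (h0 : nat), 0 < c /\
    forall h n : nat, (h0 <= h)%N -> (h <= n)%N ->
      exists e : rel 'I_n,
        [/\ simple_graph e, connected_graph e, hadwiger e h &
          forall A : learner 'I_n, valid_learner e A ->
            exists y : {ffun 'I_n -> bool},
              convex_bipartition e y /\ c * h%:R <= (mistakes A y)%:R].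
Proof.
exists (1/2), 2%N; split; first by lra.
move=> h n Hh Hhn.
case: n Hhn => [|n'] Hhn; first by exfalso; lia.
exists (ge h n'.+1). split.
- exact: ge_simple.
- exact: (@ge_conn h n'.+1 ord0 erefl Hh).
- split; first exact: (@lb h n'.+1 Hhn).
  by move=> w; exact: (@ub h n'.+1 ord0 erefl Hh Hhn w).
- move=> A HA. pose S := [pred v : 'I_n'.+1 | (0 < v)%N && (v < h)%N].
  exists (yadv _ S A).
  have Hc : convex_bipartition (ge h n'.+1) (yadv _ S A).
    by apply: convex_y => v Hv; apply: yadv_out.
  split => //.
  have Hu := HA _ Hc.
  have Hm : (size [seq inord i : 'I_n'.+1 | i <- iota 1 h.-1] <= mistakes A (yadv _ S A))%N.
    apply: adv_main => //.
      rewrite map_inj_in_uniq ?iota_uniq // => i j Hi Hj E.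
      move: Hi Hj; rewrite !mem_iota => Hi Hj.
      by have := congr1 val E; rewrite /= !inordK //; lia.
    move=> x /mapP [i Hi ->]; move: Hi; rewrite mem_iota => Hi.
    by rewrite inE /= inordK; lia.
  move: Hm; rewrite size_map size_iota => Hm.
  have H2 : (h <= 2 * mistakes A (yadv _ S A))%N by lia.
  have : (h%:R <= 2 * (mistakes A (yadv _ S A))%:R :> rat).
    by rewrite -natrM ler_nat.
  move=> H3. lra.
Qed.
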